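(* Let $(A,B)$ be a finite-dimensional odd-symmetric associative superalgebra over an algebraically closed field $\mathbb{K}$ of characteristic zero. Then $A_{\bar 1}$ is a semi-simple $A_{\bar 0}$-bimodule if and only if $A_{\bar 0}$ is a semi-simple $A_{\bar 0}$-bimodule.
   Context: A superalgebra is $\mathbb{Z}_2$-graded, $A=A_{\bar 0}\oplus A_{\bar 1}$, $A_\alpha A_\beta\subseteq A_{\alpha+\beta}$. An odd-symmetric structure on $A$ is a bilinear form $B$ with $B(A_{\bar 0},A_{\bar 0})=B(A_{\bar 1},A_{\bar 1})=0$ which is supersymmetric ($B(x,y)=(-1)^{|x||y|}B(y,x)$), associative ($B(xy,z)=B(x,yz)$) and non-degenerate. $A_{\bar 0}$ and $A_{\bar 1}$ are $A_{\bar 0}$-bimodules via left and right multiplication; an $A_{\bar 0}$-bimodule is semi-simple if every sub-bimodule admits a complementary sub-bimodule. *)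

(* Defs.v *)
From HB Require Import structures.
From mathcomp Require Import all_boot all_order all_algebra.
Set Implicit Arguments. Unset Strict Implicit. Unset Printing Implicit Defensive.
Import GRing.Theory.
Local Open Scope ring_scope.

(* A finite-dimensional superalgebra is modelled as a finite-dimensional
   K-vector space V (a vectType) with a bilinear product [mul] and two
   subspaces A0, A1 with V = A0 (+) A1 (direct sum). *)

Section SuperAlg.
Variables (K : fieldType) (V : vectType K).

Definition bilinear_mul (mul : V -> V -> V) : Prop :=
  (forall (a : K) (x y z : V), mul (a *: x + y) z = a *: mul x z + mul y z) /\
  (forall (a : K) (x y z : V), mul z (a *: x + y) = a *: mul z x + mul z y).

Definition bilinear_form (B : V -> V -> K) : Prop :=
  (forall (a : K) (x y z : V), B (a *: x + y) z = a * B x z + B y z) /\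
  (forall (a : K) (x y z : V), B z (a *: x + y) = a * B z x + B z y).

Definition is_assoc_superalgebra (mul : V -> V -> V) (A0 A1 : {vspace V}) : Prop :=
  bilinear_mul mul /\
  (A0 + A1)%VS = fullv /\ directv (A0 + A1)%VS /\
  (forall x y, x \in A0 -> y \in A0 -> mul x y \in A0) /\
  (forall x y, x \in A0 -> y \in A1 -> mul x y \in A1) /\
  (forall x y, x \in A1 -> y \in A0 -> mul x y \in A1) /\
  (forall x y, x \in A1 -> y \in A1 -> mul x y \in A0) /\
  (forall x y z, mul (mul x y) z = mul x (mul y z)).

Definition odd_symmetric (mul : V -> V -> V) (A0 A1 : {vspace V})
    (B : V -> V -> K) : Prop :=
  bilinear_form B /\
  (forall x y, x \in A0 -> y \in A0 -> B x y = 0) /\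
  (forall x y, x \in A1 -> y \in A1 -> B x y = 0) /\
      (* supersymmetry on homogeneous elements: sign (-1)^{|x||y|} *)
  (forall x y, x \in A0 -> y \in A0 -> B x y = B y x) /\
  (forall x y, x \in A0 -> y \in A1 -> B x y = B y x) /\
  (forall x y, x \in A1 -> y \in A0 -> B x y = B y x) /\
  (forall x y, x \in A1 -> y \in A1 -> B x y = - B y x) /\
  (forall x y z, B (mul x y) z = B x (mul y z)) /\
  (forall x, (forall y, B x y = 0) -> x = 0).

Definition sub_bimodule (mul : V -> V -> V) (A0 M U : {vspace V}) : Prop :=
  (U <= M)%VS /\
  (forall a u, a \in A0 -> u \in U -> mul a u \in U /\ mul u a \in U).

Definition semisimple_bimodule (mul : V -> V -> V) (A0 M : {vspace V}) : Prop :=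
  forall U, sub_bimodule mul A0 M U ->
    exists W, [/\ sub_bimodule mul A0 M W, (U + W)%VS = M & (U :&: W)%VS = 0%VS].

End SuperAlg.

(* Main.v *)
Require Import Defs.
From HB Require Import structures.
From mathcomp Require Import all_boot all_order all_algebra.
From mathcomp Require Import zify.
Set Implicit Arguments. Unset Strict Implicit. Unset Printing Implicit Defensive.
Import GRing.Theory.
Local Open Scope ring_scope.

Section Ann.
Variables (K : fieldType) (V : vectType K) (pr : V -> V -> K).
Hypothesis prL : forall a x y z, pr (a *: x + y) z = a * pr x z + pr y z.
Hypothesis prR : forall a x y z, pr z (a *: x + y) = a * pr z x + pr z y.

Lemma pr0l z : pr 0 z = 0.
Proof. have h := prL 1 0 0 z; rewrite scaler0 addr0 mul1r in h.
by apply: (addrI (pr 0 z)); rewrite addr0 -h. Qed.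

Lemma prDl x y z : pr (x + y) z = pr x z + pr y z.
Proof. by have := prL 1 x y z; rewrite scale1r mul1r. Qed.
Lemma prZl a x z : pr (a *: x) z = a * pr x z.
Proof. by rewrite -[a *: x]addr0 prL pr0l addr0. Qed.
Lemma pr_suml I (r : seq I) (P : pred I) (F : I -> V) z :
  pr (\sum_(i <- r | P i) F i) z = \sum_(i <- r | P i) pr (F i) z.
Proof. by elim/big_rec2: _ => [|i y1 y2 _ <-]; rewrite ?pr0l ?prDl. Qed.

Definition annF (S : {vspace V}) (y : V) : 'rV[K]_(\dim S) :=
  \row_i pr (vbasis S)`_i y.

Lemma annF_lin S : linear (annF S).
Proof. by move=> a x y; apply/rowP => i; rewrite !mxE prR. Qed.

Definition annFL S : {linear V -> 'rV[K]_(\dim S)} :=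
  HB.pack (annF S) (GRing.isLinear.Build _ _ _ _ (annF S) (annF_lin S)).

Definition ann (Q S : {vspace V}) : {vspace V} := (Q :&: lker (linfun (annFL S)))%VS.

Lemma annP (Q S : {vspace V}) y : reflect (y \in Q /\ forall s, s \in S -> pr s y = 0) (y \in ann Q S).
Proof.
rewrite /ann memv_cap memv_ker lfunE /=.
apply: (iffP andP) => [[yQ /eqP H]|[yQ H]]; split => //.
  move=> s /coord_vbasis ->; rewrite pr_suml big1 // => i _.
  rewrite prZl; have := congr1 (fun m : 'rV[K]_(\dim S) => m ord0 i) H.
  by rewrite /= /annF !mxE => ->; rewrite mulr0.
apply/eqP/rowP => i; rewrite /= /annF !mxE; apply: H.
by apply: vbasis_mem; apply: mem_nth; rewrite size_tuple.
Qed.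

Lemma dim_ann (Q S : {vspace V}) : (\dim Q <= \dim (ann Q S) + \dim S)%N.
Proof.
rewrite /ann -(limg_ker_dim (linfun (annFL S)) Q) leq_add2l.
apply: leq_trans (dimvS (subvf _)) _.
by rewrite dimvf /dim /= mul1n.
Qed.
End Ann.
Section Transfer.
Variables (K : fieldType) (V : vectType K) (pr : V -> V -> K).
Variables (mul : V -> V -> V) (A0 P Q : {vspace V}).
Hypothesis prL : forall a x y z, pr (a *: x + y) z = a * pr x z + pr y z.
Hypothesis prR : forall a x y z, pr z (a *: x + y) = a * pr z x + pr z y.
Hypothesis ndP : forall x, x \in P -> (forall y, y \in Q -> pr x y = 0) -> x = 0.
Hypothesis ndQ : forall y, y \in Q -> (forall x, x \in P -> pr x y = 0) -> y = 0.
Hypothesis H1a : forall a x y, a \in A0 -> x \in P -> y \in Q -> pr x (mul a y) = pr (mul x a) y.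
Hypothesis H1b : forall a x y, a \in A0 -> x \in P -> y \in Q -> pr x (mul y a) = pr (mul a x) y.
Hypothesis clP : forall a x, a \in A0 -> x \in P -> mul a x \in P /\ mul x a \in P.
Hypothesis clQ : forall a x, a \in A0 -> x \in Q -> mul a x \in Q /\ mul x a \in Q.

Let fpr := fun x y => pr y x.
Let fprR : forall a x y z, fpr z (a *: x + y) = a * fpr z x + fpr z y.
Proof. by move=> *; rewrite /fpr prL. Qed.

Let annQ (S : {vspace V}) := ann prR Q S.
Let annPl (T : {vspace V}) := ann fprR P T.

Let annQP (S : {vspace V}) y : reflect (y \in Q /\ forall s, s \in S -> pr s y = 0) (y \in annQ S).
Proof. exact: annP. Qed.
Let annPlP (T : {vspace V}) x : reflect (x \in P /\ forall t, t \in T -> pr x t = 0) (x \in annPl T).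
Proof. exact: annP. Qed.

Let prDr x y z : pr z (x + y) = pr z x + pr z y.
Proof. by have := prR 1 x y z; rewrite scale1r mul1r. Qed.

Let sub0 (U : {vspace V}) : (forall y, y \in U -> y = 0) -> U = 0%VS.
Proof. by move=> H; apply/eqP; rewrite -subv0; apply/subvP => y /H ->; rewrite mem0v. Qed.

Let annQ0 : annQ P = 0%VS.
Proof. by apply: sub0 => y /annQP [yQ H]; apply: ndQ. Qed.
Let annPl0 : annPl Q = 0%VS.
Proof. by apply: sub0 => x /annPlP [xP H]; apply: ndP. Qed.

Let dimPQ : \dim P = \dim Q.
Proof.
apply/eqP; rewrite eqn_leq.
have := dim_ann fprR P Q; rewrite -/(annPl Q) annPl0 dimv0 add0n => ->.
by have := dim_ann prR Q P; rewrite -/(annQ P) annQ0 dimv0 add0n.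
Qed.

Lemma transfer_ss : semisimple_bimodule mul A0 P -> semisimple_bimodule mul A0 Q.
Proof.
move=> ssP U [UQ Ubi].
have U'bi : sub_bimodule mul A0 P (annPl U).
  split; first by apply/subvP => x /annPlP [].
  move=> a x aA /annPlP [xP Hx]; have [axP xaP] := clP aA xP.
  split; apply/annPlP; split => // t tU; have tQ := subvP UQ t tU.
    by rewrite -H1b // Hx //; case: (Ubi a t aA tU).
  by rewrite -H1a // Hx //; case: (Ubi a t aA tU).
have [W' [[W'P W'bi] sumW' capW']] := ssP _ U'bi.
exists (annQ W'); split.
- split; first by apply/subvP => y /annQP [].
  move=> a y aA /annQP [yQ Hy]; have [ayQ yaQ] := clQ aA yQ.
  split; apply/annQP; split => // s sW'; have sP := subvP W'P s sW'.
    by rewrite H1a // Hy //; case: (W'bi a s aA sW').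
  by rewrite H1b // Hy //; case: (W'bi a s aA sW').
- have capUW : (U :&: annQ W' = 0)%VS.
    apply: sub0 => y /memv_capP [yU /annQP [yQ Hy]].
    apply: ndQ => // x; rewrite -sumW' => /memv_addP [u uU [w wW ->]].
    rewrite (prDl prL) (Hy w wW) addr0.
    by case/annPlP: uU => _ ->.
  apply/eqP; rewrite eqEdim subv_add UQ; apply/andP; split.
    by apply/subvP => y /annQP [].
  rewrite dimv_disjoint_sum //.
  have h1 := dim_ann prR Q W'.
  have h2 := dim_ann fprR P U.
  have h3 := dimv_disjoint_sum capW'.
  rewrite sumW' in h3.
  rewrite -/(annQ W') in h1; rewrite -/(annPl U) in h2.
  rewrite -dimPQ in h1 *; lia.
- apply: sub0 => y /memv_capP [yU /annQP [yQ Hy]].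
  apply: ndQ => // x; rewrite -sumW' => /memv_addP [u uU [w wW ->]].
  rewrite (prDl prL) (Hy w wW) addr0.
  by case/annPlP: uU => _ ->.
Qed.
End Transfer.

Theorem mainTheorem11 (K : closedFieldType) (V : vectType K)
    (mul : V -> V -> V) (A0 A1 : {vspace V}) (B : V -> V -> K) :
  [pchar K] =i pred0 ->
  is_assoc_superalgebra mul A0 A1 ->
  odd_symmetric mul A0 A1 B ->
  (semisimple_bimodule mul A0 A1 <-> semisimple_bimodule mul A0 A0).
Proof.
move=> _ [_ [sum [_ [c00 [c01 [c10 [_ _]]]]]]].
move=> [[bL bR] [B00 [B11 [_ [s01 [s10 [_ [Bas nd]]]]]]]].
have bDr : forall x y z, B z (x + y) = B z x + B z y.
  by move=> x y z; have := bR 1 x y z; rewrite scale1r mul1r.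
have dec : forall v, exists2 v0, v0 \in A0 & exists2 v1, v1 \in A1 & v = v0 + v1.
  by move=> v; apply/memv_addP; rewrite sum memvf.
have nd0 : forall x, x \in A0 -> (forall y, y \in A1 -> B x y = 0) -> x = 0.
  move=> x xA H; apply: nd => v; have [v0 h0 [v1 h1 ->]] := dec v.
  by rewrite bDr B00 // H // addr0.
have nd1 : forall y, y \in A1 -> (forall x, x \in A0 -> B x y = 0) -> y = 0.
  move=> y yA H; apply: nd => v; have [v0 h0 [v1 h1 ->]] := dec v.
  by rewrite bDr (B11 y v1) // s10 // H // addr0.
split.
- apply: (@transfer_ss K V (fun x y => B y x) mul A0 A1 A0).
  + by move=> *; rewrite bR.
  + by move=> *; rewrite bL.
  + by move=> x xA H; apply: nd1.
  + move=> y yA H; apply: nd0 => // x xA; first [exact: H x xA | by rewrite s01 // H | by rewrite -s01 // H].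
  + move=> a x y aA xA yA /=.
    by rewrite Bas -(Bas y x a) (s10 (mul y x) a) // c01.
  + by move=> a x y aA xA yA /=; rewrite Bas.
  + by move=> a x aA xA; split; [apply: c01 | apply: c10].
  + by move=> a x aA xA; split; apply: c00.
- apply: (@transfer_ss K V B mul A0 A0 A1).
  + exact: bL.
  + exact: bR.
  + exact: nd0.
  + exact: nd1.
  + by move=> a x y aA xA yA; rewrite Bas.
  + move=> a x y aA xA yA.
    by rewrite (s01 x (mul y a)) ?c10 // Bas (s10 y (mul a x)) ?c00.
  + by move=> a x aA xA; split; apply: c00.
  + by move=> a x aA xA; split; [apply: c01 | apply: c10].
Qed.
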